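(* If $T$ is a tree of order $n\ge 2$, then $\gamma_{\rm gr}^t(T) = n$ if and only if $T$ has a perfect matching.
   Context: $N(v)$ denotes the open neighborhood of $v$. A sequence $S=(v_1,\ldots,v_k)$ of distinct vertices of a graph $G$ without isolated vertices is a legal sequence if $N(v_i)\setminus \bigcup_{j=1}^{i-1} N(v_j)\neq\emptyset$ for every $i\in\{2,\ldots,k\}$, and a total dominating sequence if moreover $\{v_1,\ldots,v_k\}$ is a total dominating set of $G$ (every vertex has a neighbor in it). $\gamma_{\rm gr}^t(G)$ is the maximum length of a total dominating sequence of $G$. *)

(* Defs.v *)
(* A simple graph is a symmetric irreflexive relation e on a finType T. *)
From mathcomp Require Import all_boot.
Set Implicit Arguments. Unset Strict Implicit. Unset Printing Implicit Defensive.

Section Graphs.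
Variables (T : finType) (e : rel T).

Definition nbhd (v : T) : {set T} := [set u | e v u].

Definition connected_graph : Prop := forall x y : T, connect e x y.

Definition acyclic_graph : Prop :=
  forall c : seq T, uniq c -> 2 < size c -> ~~ cycle e c.

Definition is_tree : Prop := connected_graph /\ acyclic_graph.

Definition nbhd_union (p : seq T) : {set T} := \bigcup_(w <- p) nbhd w.

Definition legal_seq (s : seq T) : bool :=
  uniq s &&
  [forall i : 'I_(size s),
     (0 < i) ==> (nbhd (tnth (in_tuple s) i) :\: nbhd_union (take i s) != set0)].

Definition total_dominating (s : seq T) : bool :=
  [forall x : T, [exists v in s, e v x]].

Definition total_dominating_seq (s : seq T) : bool :=
  legal_seq s && total_dominating s.

(* gamma_gr^t : the maximum length of a total dominating sequence
   (lengths are bounded by #|T| since entries are distinct) *)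
Definition gamma_gr_t : nat :=
  \max_(k < #|T|.+1 | [exists t : k.-tuple T, total_dominating_seq t]) k.

Definition has_perfect_matching : Prop :=
  exists M : {set {set T}},
    (forall m, m \in M -> exists u v, e u v /\ m = [set u; v]) /\
    (forall x : T, #|[set m in M | x \in m]| = 1).

End Graphs.

(* Main.v *)
Require Import Defs.
From mathcomp Require Import all_boot.
Set Implicit Arguments. Unset Strict Implicit. Unset Printing Implicit Defensive.

Fixpoint nbk (T : eqType) (s : seq T) : bool :=
  match s with
  | a :: ((b :: c :: _) as s') => (a != c) && nbk s'
  | _ => true
  end.

Lemma nbk_cons (T : eqType) (x : T) s : nbk (x :: s) -> nbk s.
Proof. by case: s => [|y [|z s]] //= /andP[]. Qed.

Lemma walk_uniq (T : finType) (e : rel T) :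
  irreflexive e -> acyclic_graph e ->
  forall s x, path e x s -> nbk (x :: s) -> uniq (x :: s).
Proof.
move=> irr acy; elim=> [|y s IH] x //.
move=> /andP[exy pys] nbx.
have uys : uniq (y :: s) by apply: IH => //; move: nbx; exact: nbk_cons.
rewrite cons_uniq uys andbT; apply/negP => xin.
set l := y :: s in xin pys uys exy nbx.
have pxl : path e x l by rewrite /= exy.
set j := index x l.
have jlt : j < size l by rewrite index_mem.
have nthj : nth x l j = x by rewrite nth_index.
have c3 : cycle e (x :: take j l).
  rewrite /= -{2}nthj -take_nth //.
  by move: pxl; rewrite -{1}(cat_take_drop j.+1 l) cat_path => /andP[].
have uc : uniq (x :: take j l).
  by rewrite /= take_uniq // andbT in_take // ltnn.
case: j jlt nthj c3 uc => [|[|j]] jlt nthj c3 uc.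
- by move: nthj exy => /= ->; rewrite irr.
- move: nthj nbx jlt; rewrite /l; case: s {IH uys pys xin l pxl c3 uc} => [|z s] //= ->.
  by rewrite eqxx.
- have sz : 2 < size (x :: take j.+2 l).
    by rewrite /= size_take; case: ifP => // _; move: jlt; rewrite /l /=; case: (size s).
  by move: (acy _ uc sz); rewrite c3.
Qed.
Lemma in_nbhd_union (T : finType) (e : rel T) p u :
  (u \in nbhd_union e p) = has (fun w => e w u) p.
Proof.
rewrite /nbhd_union; elim: p => [|w p IH]; first by rewrite big_nil inE.
by rewrite big_cons in_setU IH /nbhd inE.
Qed.

Lemma gamma_full (T : finType) (e : rel T) (s : seq T) :
  size s = #|T| -> total_dominating_seq e s -> gamma_gr_t e = #|T|.
Proof.
move=> ss tds; apply/eqP; rewrite eqn_leq; apply/andP; split.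
  by apply/bigmax_leqP => i _; rewrite -ltnS.
have ss' : size s == #|T| by rewrite ss.
apply: (@leq_bigmax_cond _ _ (fun i : 'I_#|T|.+1 => nat_of_ord i) ord_max).
by apply/existsP; exists (Tuple ss').
Qed.

Lemma mate_exists (T : finType) (e : rel T) :
  symmetric e -> irreflexive e -> has_perfect_matching e ->
  exists mate : T -> T, (forall x, e x (mate x)) /\ (forall x, mate (mate x) = x).
Proof.
move=> sym irr [M [HM H1]].
have Pe : forall x y, [set x; y] \in M -> e x y.
  move=> x y /HM [u [v [euv E]]].
  have uv : u != v by apply: contraTneq euv => ->; rewrite irr.
  have : u \in [set x; y] by rewrite E !inE eqxx.
  have : v \in [set x; y] by rewrite E !inE eqxx orbT.
  rewrite !inE => /orP[] /eqP ? /orP[] /eqP ?; subst; rewrite ?eqxx // in uv.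
  by rewrite sym.
have Uq : forall x y z, [set x; y] \in M -> [set x; z] \in M -> y = z.
  move=> x y z my mz; move/eqP/cards1P: (H1 x) => [m0 Hm].
  have : [set x; y] \in [set m in M | x \in m] by rewrite inE my !inE eqxx.
  have : [set x; z] \in [set m in M | x \in m] by rewrite inE mz !inE eqxx.
  rewrite Hm !inE => /eqP E1 /eqP E2.
  have : z \in [set x; y] by rewrite E2 -E1 !inE eqxx orbT.
  rewrite !inE => /orP[] /eqP // zx.
  by move: (Pe _ _ mz); rewrite zx irr.
have Ex : forall x, exists y, [set x; y] \in M.
  move=> x; move/eqP/cards1P: (H1 x) => [m0 Hm].
  have : m0 \in [set m in M | x \in m] by rewrite Hm inE.
  rewrite inE => /andP[m0M xm0].
  case: (HM _ m0M) => [u [v [euv E]]].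
  move: xm0; rewrite E !inE => /orP[] /eqP ->.
    by exists v; rewrite -E.
  by exists u; rewrite setUC -E.
exists (fun x => odflt x [pick y | [set x; y] \in M]).
have Hp : forall x, [set x; odflt x [pick y | [set x; y] \in M]] \in M.
  move=> x; case: pickP => //= F; case: (Ex x) => y Hy; by move: (F y); rewrite /= Hy.
split=> x; first exact: Pe.
apply/esym/(Uq (odflt x [pick y | [set x; y] \in M])); last exact: Hp.
by rewrite setUC.
Qed.

Fixpoint wk (T : Type) (f : T -> T) (s : seq T) : seq T :=
  if s is v :: s' then v :: f v :: wk f s' else [::].

Lemma mem_wk (T : eqType) (f : T -> T) s v : v \in s -> v \in wk f s.
Proof.
elim: s => [|w s IH] //=; rewrite !inE => /orP[->//|/IH ->]; by rewrite !orbT.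
Qed.

Lemma dir2 (T : finType) (e : rel T) :
  symmetric e -> irreflexive e -> acyclic_graph e -> has_perfect_matching e ->
  gamma_gr_t e = #|T|.
Proof.
move=> sym irr acy pm.
case: (mate_exists sym irr pm) => mate [emate mm].
have minj : injective mate := can_inj mm.
pose R := [rel x y | (x != y) && e y (mate x)].
have wkP : forall q x, path R x q ->
    path e x (mate x :: wk mate q) && nbk (x :: mate x :: wk mate q).
  elim=> [|y q IH] x; first by rewrite /= emate.
  move=> /andP[/andP[xy eym] pq]; case/andP: (IH y pq) => H1 H2.
  apply/andP; split.
    change (e x (mate x) && (e (mate x) y && path e y (mate y :: wk mate q))).
    by rewrite emate sym eym H1.
  change ((x != y) && ((mate x != mate y) && nbk (y :: mate y :: wk mate q))).
  by rewrite xy (inj_eq minj) xy H2.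
have noR : forall x q, path R x q -> last x q = x -> q != [::] -> False.
  move=> x q pq lq qn; case/andP: (wkP q x pq) => pw nw.
  have := walk_uniq irr acy pw nw.
  have : x \in wk mate q.
    apply: mem_wk; case: q qn pq lq {pw nw} => // y q _ _ /= <-; exact: mem_last.
  by rewrite /= inE => ->; rewrite orbT.
pose a v := #|[set u | connect R u v]|.
have Rlt : forall x y, R x y -> a x < a y.
  move=> x y Rxy; apply: proper_card; apply/properP; split.
    apply/subsetP => u; rewrite !inE => cux.
    by apply: (connect_trans cux); apply: connect1.
  exists y; rewrite !inE ?connect0 //.
  apply/negP => /connectP [p pyp lyp].
  by apply: (noR x (y :: p)) => //=; move: Rxy => /= ->; rewrite pyp.
pose le := fun x y => a x <= a y.
have le_tr : transitive le by move=> y x z; apply: leq_trans.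
have le_refl : reflexive le by move=> x; apply: leqnn.
have le_tot : total le by move=> x y; apply: leq_total.
pose s := sort le (enum T).
have us : uniq s by rewrite sort_uniq enum_uniq.
have ms : forall x, x \in s by move=> x; rewrite mem_sort mem_enum.
have sorts : sorted le s by apply: sort_sorted.
apply: (@gamma_full _ _ s); first by rewrite size_sort cardT.
rewrite /total_dominating_seq /legal_seq us /=; apply/andP; split.
  apply/forallP => i; apply/implyP => i0.
  have x0 : T := tnth (in_tuple s) i; rewrite (tnth_nth x0) /=.
  set v := nth _ s i.
  apply/set0Pn; exists (mate v).
  rewrite !inE in_nbhd_union emate andbT; apply/hasPn => w win; apply/negP => ewm.
  have iv : index v s = i by rewrite index_uniq.
  have iw : index w s < i by apply: index_ltn.
  have wv : v != w by apply: contraTneq iw => <-; rewrite iv ltnn.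
  have := Rlt v w; rewrite /= wv ewm => /(_ isT).
  have := sorted_leq_nth le_tr le_refl v sorts.
  move=> /(_ (index w s) (index v s)); rewrite !inE !index_mem !ms.
  rewrite !nth_index ?ms // iv => /(_ isT isT (ltnW iw)).
  by rewrite /le leqNgt => /negbTE ->.
apply/forallP => x; apply/existsP; exists (mate x).
by rewrite ms sym emate.
Qed.

Lemma dir1 (T : finType) (e : rel T) :
  symmetric e -> irreflexive e -> is_tree e -> 2 <= #|T| ->
  gamma_gr_t e = #|T| -> has_perfect_matching e.
Proof.
move=> sym irr [conn acy] n2 gam.
have nbr : forall x, exists y, e x y.
  move=> x; have : 0 < #|predC1 x| by rewrite cardC1; case: #|T| n2 => [|[]].
  case/card_gt0P => y; rewrite !inE => yx.
  case/connectP: (conn x y) => [[|z p]] /=; first by move=> _ yx'; rewrite yx' eqxx in yx.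
  by case/andP => exz _ _; exists z.
have [s [ss ls]] : exists s : seq T, size s = #|T| /\ legal_seq e s.
  case: (boolP [exists t : #|T|.-tuple T, total_dominating_seq e t]).
    case/existsP => t /andP[lt _]; by exists t; rewrite size_tuple.
  move=> nf; have : gamma_gr_t e <= #|T|.-1.
    apply/bigmax_leqP => i /existsP [t tt]; have := ltn_ord i; rewrite ltnS leq_eqVlt.
    case/orP => [/eqP ei|lt]; first last.
      by rewrite -ltnS prednK // (ltnW n2).
    have st : size t == #|T| by rewrite size_tuple ei.
    by move: nf => /existsPn /(_ (Tuple st)); rewrite tt.
  by rewrite gam leqNgt ltn_predL (ltnW n2).
case/andP: ls => us /forallP lg.
have ms : forall x, x \in s.
  have cs : #|s| = #|T| by rewrite (card_uniqP us) ss.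
  have H : s =i T by apply/(subset_cardP cs)/subsetP.
  by move=> x; rewrite H.
pose F x := if 0 < index x s then nbhd e x :\: nbhd_union e (take (index x s) s)
            else nbhd e x.
pose f x := odflt x [pick y in F x].
have fP : forall x, f x \in F x.
  move=> x; have [y yF] : exists y, y \in F x.
    rewrite /F; case: ifP => i0.
      have il : index x s < size s by rewrite index_mem.
      move: (lg (Ordinal il)); rewrite /= i0 /= (tnth_nth x) /= nth_index //.
      by case/set0Pn => y yF; exists y.
    by case: (nbr x) => y exy; exists y; rewrite /nbhd inE.
  rewrite /f; case: pickP => [z //|N].
  by move: (N y); rewrite /= yF.
have ef : forall x, e x (f x).
  move=> x; move: (fP x); rewrite /F; case: ifP => _; rewrite !inE; [by case/andP | by []].
have key : forall x y, index x s < index y s -> f x != f y.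
  move=> x y lt; apply/eqP => E; move: (fP y); rewrite /F.
  have -> : 0 < index y s by case: (index y s) lt.
  rewrite !inE in_nbhd_union => /andP[/hasPn /(_ x)].
  by rewrite in_take ?ms // lt -E ef => /(_ isT).
have finj : injective f.
  move=> x y E; case: (ltngtP (index x s) (index y s)) => [lt|lt|eq].
  - by move: (key _ _ lt); rewrite E eqxx.
  - by move: (key _ _ lt); rewrite E eqxx.
  - by rewrite -(nth_index x (ms x)) eq nth_index.
have ff : forall x, f (f x) = x.
  move=> x; have uc := orbit_uniq f x.
  have cc := cycle_orbit finj x.
  have ce : cycle e (orbit f x).
    by apply: sub_cycle cc => u v /eqP <-.
  have : ~~ (2 < size (orbit f x)).
    by apply/negP => sz; move: (acy _ uc sz); rewrite ce.
  move: uc cc ce (order_gt0 f x); rewrite /orbit size_traject.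
  case: (order f x) => [|[|[|k]]] //= _.
    by rewrite andbT => /eqP fx; move: (ef x); rewrite fx irr.
  by rewrite andbT eqxx => /eqP.
exists [set [set x; f x] | x : T]; split.
  by move=> m /imsetP [x _ ->]; exists x, (f x).
move=> x; apply/eqP/cards1P; exists [set x; f x]; apply/setP => m.
rewrite !inE; apply/andP/eqP.
  case=> /imsetP [y _ ->]; rewrite !inE => /orP[] /eqP ->; first by [].
  by rewrite ff setUC.
move=> ->; split; last by rewrite !inE eqxx.
by apply/imsetP; exists x.
Qed.

Theorem mainTheorem8 (T : finType) (e : rel T) :
  symmetric e -> irreflexive e -> is_tree e -> 2 <= #|T| ->
  (gamma_gr_t e = #|T| <-> has_perfect_matching e).
Proof.
move=> sym irr tr n2; split; first exact: dir1.
by case: tr => _ acy; apply: dir2.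
Qed.
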